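(* Let $A \in \mathbb{C}^{n \times n}$, and fix $A^-\in A\{1\}$ and $A^{GD}\in A\{GD\}$. For $X\in\mathbb{C}^{n\times n}$ the following are equivalent: (i) $X = A^{GD}AA^{-}$; (ii) $XA=A^{GD}A$ and $N(X)=N(AA^{-})$; (iii) $XAA^{GD}=A^{GD}AA^{GD}$ and $N(X)=N(AA^{-})$.
   Context: For $A\in\mathbb{C}^{n\times n}$, $ind(A)$ is the smallest nonnegative integer $k$ with $\mathrm{rank}(A^k)=\mathrm{rank}(A^{k+1})$. $A\{1\}$ is the set of matrices $X$ with $AXA=A$. With $k=ind(A)$, $A\{GD\}$ is the set of G-Drazin inverses of $A$: matrices $X$ with $AXA=A$, $XA^{k+1}=A^k$, $A^{k+1}X=A^k$. $N(\cdot)$ denotes null space. The matrix $A^{GD}AA^-$ is called the GD1 inverse of $A$ associated with $A^-$ and $A^{GD}$. *)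

(* Defs.v *)
From mathcomp Require Import all_boot all_order all_algebra.
From mathcomp Require Import all_reals.
From mathcomp Require Import complex.
Set Implicit Arguments. Unset Strict Implicit. Unset Printing Implicit Defensive.
Import Order.TTheory GRing.Theory Num.Theory.
Local Open Scope ring_scope.

Definition is_ind {F : fieldType} {n : nat} (A : 'M[F]_n) (k : nat) : Prop :=
  \rank (A ^+ k) = \rank (A ^+ k.+1) /\
  (forall j : nat, (j < k)%N -> \rank (A ^+ j) <> \rank (A ^+ j.+1)).

Definition inner_inv {F : fieldType} {n : nat} (A X : 'M[F]_n) : Prop :=
  A *m X *m A = A.

Definition GD_inv {F : fieldType} {n : nat} (A X : 'M[F]_n) : Prop :=
  forall k, is_ind A k ->
    [/\ A *m X *m A = A, X *m A ^+ k.+1 = A ^+ k & A ^+ k.+1 *m X = A ^+ k].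

Definition nullsp_eq {F : fieldType} {n : nat} (X Y : 'M[F]_n) : Prop :=
  forall v : 'cV[F]_n, X *m v = 0 <-> Y *m v = 0.

(* Main.v *)
Require Import Defs.
From mathcomp Require Import all_boot all_order all_algebra.
From mathcomp Require Import all_reals.
From mathcomp Require Import complex.
From mathcomp Require Import zify.
From Stdlib Require Import Classical.
Import GRing.Theory Num.Theory.
Local Open Scope ring_scope.
Local Open Scope complex_scope.


Lemma ind_exists {F : fieldType} {n : nat} (A : 'M[F]_n) : exists k, is_ind A k.
Proof.
have Hdec j : (\rank (A ^+ j.+1) <= \rank (A ^+ j))%N.
  by rewrite exprSr mxrankM_maxl.
have Hex : exists j, \rank (A ^+ j) == \rank (A ^+ j.+1).
  apply: NNPP => Hn.
  have H j : (\rank (A ^+ j) + j <= n)%N.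
    elim: j => [|j IH]; first by rewrite addn0 expr0 mxrank1.
    have Hne : \rank (A ^+ j) != \rank (A ^+ j.+1).
      by apply/negP => E; apply: Hn; exists j.
    have : (\rank (A ^+ j.+1) < \rank (A ^+ j))%N.
      by rewrite ltn_neqAle eq_sym Hne Hdec.
    move: IH; lia.
  by have := H n.+1; lia.
exists (ex_minn Hex); split.
  by case: ex_minnP => m /eqP.
case: ex_minnP => m _ Hmin j Hj E.
by have := Hmin j (introT eqP E); lia.
Qed.

Lemma null_incl_mx {F : pzRingType} {n : nat} (A Y M : 'M[F]_n) :
  (forall v : 'cV[F]_n, A *m v = 0 -> Y *m v = 0) -> A *m M = 0 -> Y *m M = 0.
Proof.
move=> H AM; apply/matrixP => i j.
have := H (M *m delta_mx j 0).
rewrite mulmxA AM mul0mx => /(_ erefl) E.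
have E2 : (Y *m col j M) i 0 = 0 by rewrite colE E mxE.
rewrite mxE in E2; rewrite [RHS]mxE -E2 mxE.
by apply: eq_bigr => k _; rewrite mxE.
Qed.

Theorem theorem2p6 (R : realType) (n : nat) (A Am AGD X : 'M[R[i]]_n) :
  inner_inv A Am -> GD_inv A AGD ->
  [<-> X = AGD *m A *m Am;
       X *m A = AGD *m A /\ nullsp_eq X (A *m Am);
       X *m A *m AGD = AGD *m A *m AGD /\ nullsp_eq X (A *m Am)].
Proof.
rewrite /inner_inv => HAm HG.
have [k Hk] := ind_exists A.
have [AGA _ _] := HG k Hk.
have key (Y : 'M[R[i]]_n) : (forall v : 'cV_n, A *m v = 0 -> Y *m v = 0) ->
    Y = Y *m AGD *m A.
  move=> H; apply/eqP; rewrite -subr_eq0 -{1}(mulmx1 Y) -!mulmxA -mulmxBr.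
  apply/eqP; apply: (null_incl_mx _ _ _ H).
  by rewrite mulmxBr mulmx1 mulmxA AGA subrr.
tfae.
- move=> ->; split.
    by rewrite -!mulmxA (mulmxA A Am A) HAm.
  move=> v; split.
    move=> /(congr1 (mulmx A)); rewrite mulmx0 !mulmxA AGA => <-.
    by [].
  by rewrite -!mulmxA => ->; rewrite !mulmx0.
- by case=> -> H; split.
- case=> H1 H2.
  have E1 : X *m A = AGD *m A.
    rewrite (key (X *m A)); last first.
      move=> v Av; rewrite -mulmxA; apply: (proj2 (H2 (A *m v))).
      by rewrite (mulmxA (A *m Am)) HAm Av.
    rewrite H1 -(key (AGD *m A)) //.
    by move=> v Av; rewrite -mulmxA Av mulmx0.
  rewrite -E1.
  apply/eqP; rewrite -subr_eq0 -{1}(mulmx1 X) -mulmxA -mulmxBr.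
  apply/eqP; apply: (null_incl_mx (A *m Am)).
    by move=> v /(H2 v).2.
  by rewrite mulmxBr mulmx1 mulmxA HAm subrr.
Qed.
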